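(* For all $M,N\in\Lambda^{001}$, if $M\longrightarrow_\beta^\infty N$ then $\mathcal T(M)\mathrel{\widetilde{\longrightarrow}_r^*}\mathcal T(N)$; that is, there are an index set $I$, resource terms $s_i$ and finite sums $T_i$ ($i\in I$) such that $\mathcal T(M)=\{s_i : i\in I\}$, $\mathcal T(N)=\bigcup_{i\in I}T_i$ and $s_i\longrightarrow_r^* T_i$ for each $i\in I$.
   Context: Fix a set $\mathcal V$ of variables. A 001-infinitary λ-term is a possibly infinite tree built from variables $x\in\mathcal V$, abstractions $\lambda x.M$ and applications $(M)N$ ($N$ the argument), such that every infinite branch enters infinitely often the argument position of an application node; $\Lambda^{001}$ is the set of such terms, up to α-equivalence, with fresh variables always available. $M[N/x]$ is capture-avoiding substitution. One-step β-reduction $\longrightarrow_\beta$ is the contextual closure (finite derivations) of $(\lambda x.M)N\longrightarrow_\beta M[N/x]$; $\longrightarrow_\beta^*$ its reflexive-transitive closure. The infinitary reduction $\longrightarrow_\beta^\infty$ is defined by the rules below, with possibly infinite derivations in which every infinite branch passes infinitely often through the third premise of (@): (var) $M\longrightarrow_\beta^* x\Rightarrow M\longrightarrow_\beta^\infty x$; (λ) $M\longrightarrow_\beta^*\lambda x.P$, $P\longrightarrow_\beta^\infty P'$ $\Rightarrow M\longrightarrow_\beta^\infty\lambda x.P'$; (@) $M\longrightarrow_\beta^*(P)Q$, $P\longrightarrow_\beta^\infty P'$, $Q\longrightarrow_\beta^\infty Q'$ $\Rightarrow M\longrightarrow_\beta^\infty(P')Q'$. Resource terms: $s::=x\mid\lambda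 x.s\mid\langle s\rangle\bar t$, $\bar t=[t_1,\dots,t_n]$ a finite multiset of resource terms. Finite sums are finite sets of resource terms written additively ($0$ empty), constructors extended by linearity. Resource substitution $s\langle\bar t/x\rangle$ is the sum over $\sigma\in\mathfrak S_n$ of the terms obtained by substituting $t_{\sigma(i)}$ for the $i$-th free occurrence of $x$ in $s$ if $x$ has exactly $n$ free occurrences, and $0$ otherwise. Simple resource reduction $\longmapsto_r$ is the least relation from terms (resp. monomials) to finite sums containing $\langle\lambda x.s\rangle\bar t\longmapsto_r s\langle\bar t/x\rangle$ and closed under abstraction, function and argument positions of applications, and elements of monomials. On finite sums, $\sum_{i=0}^n s_i\longrightarrow_r\sum_{i=0}^n T_i$ when $s_0\longmapsto_r T_0$ and for $1\le i\le n$ either $s_i\longmapsto_r T_i$ or $T_i=s_i$; $\longrightarrow_r^*$ is the reflexive-transitive closure (a single term is identified with the one-element sum). For sets $\mathcal S,\mathcal S'$ of resource terms, $\mathcal S\mathrel{\widetilde{\longrightarrow}_r^*}\mathcal S'$ is as spelled out in the claim. Taylor approximation $\ltimes$ is inductive: $x\ltimes x$; $s\ltimes M\Rightarrow\lambda x.s\ltimes\lambda x.M$; ($s\ltimes M$ and $t_i\ltimes N$ for all $i$) $\Rightarrow\langle s\rangle[t_1,\dots,t_n]\ltimes(M)N$. $\mathcal T(M)=\{s : s\ltimes M\}$. *)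

(* Defs.v *)
(* Terms are represented with de Bruijn indices (this quotients
   by alpha-equivalence; free variables are natural numbers). *)
From Stdlib Require Import List Arith PeanoNat.
Import ListNotations.

CoInductive term : Type :=
| Var : nat -> term
| Lam : term -> term
| App : term -> term -> term.   (* App M N = (M)N, N the argument *)

CoInductive bisim : term -> term -> Prop :=
| bisim_var n : bisim (Var n) (Var n)
| bisim_lam M M' : bisim M M' -> bisim (Lam M) (Lam M')
| bisim_app M M' N N' : bisim M M' -> bisim N N' -> bisim (App M N) (App M' N').

(* The 001 condition: every infinite branch enters the argument position of
   an application infinitely often.  Mixed induction/coinduction: inductive
   through lambda / function position, coinductive through argument position. *)
Inductive wf001_step (P : term -> Prop) : term -> Prop :=
| wf_var n : wf001_step P (Var n)
| wf_lam M : wf001_step P M -> wf001_step P (Lam M)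
| wf_app M N : wf001_step P M -> P N -> wf001_step P (App M N).

Definition wf001 (M : term) : Prop :=
  exists P : term -> Prop, P M /\ forall M', P M' -> wf001_step P M'.

CoFixpoint lift (c d : nat) (M : term) : term :=
  match M with
  | Var n => Var (if n <? c then n else n + d)
  | Lam M1 => Lam (lift (S c) d M1)
  | App M1 M2 => App (lift c d M1) (lift c d M2)
  end.

(* subst k N M : capture-avoiding substitution of N for the variable bound
   at depth k in M (the binder being removed); M[N/x] is subst 0 N M. *)
CoFixpoint subst (k : nat) (N : term) (M : term) : term :=
  match M with
  | Var n => if n =? k then lift 0 k N
             else if k <? n then Var (n - 1) else Var n
  | Lam M1 => Lam (subst (S k) N M1)
  | App M1 M2 => App (subst k N M1) (subst k N M2)
  end.

Inductive bstep : term -> term -> Prop :=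
| bstep_beta M N : bstep (App (Lam M) N) (subst 0 N M)
| bstep_lam M M' : bstep M M' -> bstep (Lam M) (Lam M')
| bstep_appl M M' N : bstep M M' -> bstep (App M N) (App M' N)
| bstep_appr M N N' : bstep N N' -> bstep (App M N) (App M N').

(* Reflexive-transitive closure; reflexivity is up to bisimilarity, i.e.
   terms are identified as trees. *)
Inductive bstar : term -> term -> Prop :=
| bstar_refl M M' : bisim M M' -> bstar M M'
| bstar_step M M1 M2 : bstep M M1 -> bstar M1 M2 -> bstar M M2.

(* Infinitary beta-reduction: rules (var), (lambda), (@); derivations may be
   infinite, but every infinite branch passes infinitely often through the
   third premise of (@).  Inductive layer for the other premises, greatest
   fixed point (relation R) for the third premise of (@). *)
Inductive ired_step (R : term -> term -> Prop) : term -> term -> Prop :=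
| ired_var M n : bstar M (Var n) -> ired_step R M (Var n)
| ired_lam M P P' : bstar M (Lam P) -> ired_step R P P' -> ired_step R M (Lam P')
| ired_app M P Q P' Q' :
    bstar M (App P Q) -> ired_step R P P' -> R Q Q' -> ired_step R M (App P' Q').

Definition ired (M N : term) : Prop :=
  exists R : term -> term -> Prop, R M N /\ forall M' N', R M' N' -> ired_step R M' N'.

(* Resource terms (de Bruijn); multisets represented by lists, and     *)
(* identified up to permutation via [req].                            *)

Inductive rterm : Type :=
| RVar : nat -> rterm
| RLam : rterm -> rterm
| RApp : rterm -> list rterm -> rterm.   (* <s>[t1,...,tn] *)

Inductive req : rterm -> rterm -> Prop :=
| req_var n : req (RVar n) (RVar n)
| req_lam s s' : req s s' -> req (RLam s) (RLam s')
| req_app s s' b b' : req s s' -> bag_req b b' -> req (RApp s b) (RApp s' b')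
with bag_req : list rterm -> list rterm -> Prop :=
| bag_req_nil : bag_req [] []
| bag_req_cons t t' b b1 b2 :
    req t t' -> bag_req b (b1 ++ b2) -> bag_req (t :: b) (b1 ++ t' :: b2).

(* Finite sums = finite sets of resource terms, represented by lists;
   equality of sums is equality of the underlying sets (modulo req). *)
Definition rsum := list rterm.

Definition sum_eq (S S' : rsum) : Prop :=
  (forall s, In s S -> exists s', In s' S' /\ req s s') /\
  (forall s', In s' S' -> exists s, In s S /\ req s s').

Fixpoint rlift (c d : nat) (s : rterm) : rterm :=
  match s with
  | RVar n => RVar (if n <? c then n else n + d)
  | RLam s1 => RLam (rlift (S c) d s1)
  | RApp s1 b => RApp (rlift c d s1) (map (rlift c d) b)
  end.

Fixpoint occ (k : nat) (s : rterm) : nat :=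
  match s with
  | RVar n => if n =? k then 1 else 0
  | RLam s1 => occ (S k) s1
  | RApp s1 b => occ k s1 + fold_right (fun t acc => occ k t + acc) 0 b
  end.

(* fill k s ts : replace the successive free occurrences (left to right) of
   the variable bound at depth k in s by the successive elements of ts
   (suitably lifted), removing that binder; returns the unused elements. *)
Fixpoint fill (k : nat) (s : rterm) (ts : list rterm) {struct s} : rterm * list rterm :=
  match s with
  | RVar n =>
      if n =? k then
        match ts with
        | t :: ts' => (rlift 0 k t, ts')
        | [] => (RVar n, [])
        end
      else if k <? n then (RVar (n - 1), ts) else (RVar n, ts)
  | RLam s1 => let (s1', ts') := fill (S k) s1 ts in (RLam s1', ts')
  | RApp s1 b =>
      let (s1', ts1) := fill k s1 ts in
      let fix fillb (b : list rterm) (ts : list rterm) : list rterm * list rterm :=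
          match b with
          | [] => ([], ts)
          | u :: b' =>
              let (u', ts2) := fill k u ts in
              let (b'', ts3) := fillb b' ts2 in (u' :: b'', ts3)
          end in
      let (b', ts2) := fillb b ts1 in (RApp s1' b', ts2)
  end.

(* all permutations of a list (enumerating the sigma in S_n) *)
Fixpoint insert_all {A : Type} (x : A) (l : list A) : list (list A) :=
  match l with
  | [] => [[x]]
  | y :: l' => (x :: y :: l') :: map (cons y) (insert_all x l')
  end.

Fixpoint perms {A : Type} (l : list A) : list (list A) :=
  match l with
  | [] => [[]]
  | x :: l' => concat (map (insert_all x) (perms l'))
  end.

(* Resource substitution s<tbar/x>, where x is the variable bound at depth 0
   in s: sum over sigma in S_n if x has exactly n = |tbar| occurrences,
   0 (empty sum) otherwise. *)
Definition rsubst (s : rterm) (b : list rterm) : rsum :=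
  if occ 0 s =? length b then map (fun p => fst (fill 0 s p)) (perms b) else [].

(* Simple resource reduction (terms to finite sums), constructors extended
   by linearity. *)
Inductive rstep : rterm -> rsum -> Prop :=
| rstep_beta s b : rstep (RApp (RLam s) b) (rsubst s b)
| rstep_lam s T : rstep s T -> rstep (RLam s) (map RLam T)
| rstep_appl s b T : rstep s T -> rstep (RApp s b) (map (fun s' => RApp s' b) T)
| rstep_appr s b1 t b2 T :
    rstep t T -> rstep (RApp s (b1 ++ t :: b2)) (map (fun t' => RApp s (b1 ++ t' :: b2)) T).

(* Reduction on finite sums: sum_{i=0}^n s_i -> sum_i T_i with s_0 |-> T_0 and,
   for i >= 1, s_i |-> T_i or T_i = s_i.  The list L lists (s_i, T_i), i>=1. *)
Definition red_sum (S S' : rsum) : Prop :=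
  exists (s0 : rterm) (T0 : rsum) (L : list (rterm * rsum)),
    rstep s0 T0 /\
    (forall p, In p L -> rstep (fst p) (snd p) \/ snd p = [fst p]) /\
    sum_eq S (s0 :: map fst L) /\
    sum_eq S' (T0 ++ concat (map snd L)).

Inductive red_star : rsum -> rsum -> Prop :=
| red_star_refl S S' : sum_eq S S' -> red_star S S'
| red_star_step S S1 S2 : red_sum S S1 -> red_star S1 S2 -> red_star S S2.

(* Taylor approximation s ⋉ M ; T(M) = {s | approx s M}. *)
Inductive approx : rterm -> term -> Prop :=
| approx_var n : approx (RVar n) (Var n)
| approx_lam s M : approx s M -> approx (RLam s) (Lam M)
| approx_app s b M N :
    approx s M -> (forall t, In t b -> approx t N) -> approx (RApp s b) (App M N).

(* Main.v *)
Require Import Defs.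
From Stdlib Require Import List Arith PeanoNat Lia Permutation.
Import ListNotations.

Definition frob (M : term) : term :=
  match M with Var n => Var n | Lam M1 => Lam M1 | App M1 M2 => App M1 M2 end.
Lemma frob_eq M : M = frob M.
Proof. destruct M; reflexivity. Qed.

Lemma lift_var c d n : lift c d (Var n) = Var (if n <? c then n else n + d).
Proof. rewrite (frob_eq (lift c d (Var n))). reflexivity. Qed.
Lemma lift_lam c d M : lift c d (Lam M) = Lam (lift (S c) d M).
Proof. rewrite (frob_eq (lift c d (Lam M))). reflexivity. Qed.
Lemma lift_app c d M N : lift c d (App M N) = App (lift c d M) (lift c d N).
Proof. rewrite (frob_eq (lift c d (App M N))). reflexivity. Qed.
Lemma subst_var k N n : subst k N (Var n) =
  if n =? k then lift 0 k N else if k <? n then Var (n - 1) else Var n.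
Proof. rewrite (frob_eq (subst k N (Var n))). simpl.
  destruct (n =? k); [ symmetry; apply frob_eq | destruct (k <? n); reflexivity]. Qed.
Lemma subst_lam k N M : subst k N (Lam M) = Lam (subst (S k) N M).
Proof. rewrite (frob_eq (subst k N (Lam M))). reflexivity. Qed.
Lemma subst_app k N M1 M2 : subst k N (App M1 M2) = App (subst k N M1) (subst k N M2).
Proof. rewrite (frob_eq (subst k N (App M1 M2))). reflexivity. Qed.

Section RInd.
Variable P : rterm -> Prop.
Hypothesis Hv : forall n, P (RVar n).
Hypothesis Hl : forall s, P s -> P (RLam s).
Hypothesis Ha : forall s b, P s -> Forall P b -> P (RApp s b).
Fixpoint rterm_ind' (s : rterm) : P s :=
  match s with
  | RVar n => Hv n
  | RLam s1 => Hl s1 (rterm_ind' s1)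
  | RApp s1 b => Ha s1 b (rterm_ind' s1)
      ((fix F (l : list rterm) : Forall P l :=
         match l with [] => Forall_nil P | x :: l' => Forall_cons x (rterm_ind' x) (F l') end) b)
  end.
End RInd.

Lemma approx_bisim : forall s M M', approx s M -> (bisim M M' \/ bisim M' M) -> approx s M'.
Proof.
  induction s as [n|s IH|s b IH IHb] using rterm_ind'; intros M M' Ha Hb;
  inversion Ha; subst.
  - destruct Hb as [Hb|Hb]; inversion Hb; subst; constructor.
  - destruct Hb as [Hb|Hb]; inversion Hb; subst; constructor; eapply IH; eauto.
  - rewrite Forall_forall in IHb.
    destruct Hb as [Hb|Hb]; inversion Hb; subst; constructor; eauto;
    intros t Ht; eapply IHb; eauto.
Qed.

Scheme req_mind := Induction for req Sort Prop
with bag_req_mind := Induction for bag_req Sort Prop.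

Lemma req_approx_gen :
  (forall u s, req u s -> forall M, approx s M -> approx u M) /\
  (forall b b', bag_req b b' -> forall N, (forall t, In t b' -> approx t N) -> forall t, In t b -> approx t N).
Proof.
  split; [apply (req_mind (fun u s _ => forall M, approx s M -> approx u M)
      (fun b b' _ => forall N, (forall t, In t b' -> approx t N) -> forall t, In t b -> approx t N))
   | apply (bag_req_mind (fun u s _ => forall M, approx s M -> approx u M)
      (fun b b' _ => forall N, (forall t, In t b' -> approx t N) -> forall t, In t b -> approx t N))];
  clear.
  all: [> intros n M H; exact H
       | intros s s' r IH M H; inversion H; subst; constructor; auto
       | intros s s' b b' r IH rb IHb M H; inversion H; subst; constructor; eauto
       | intros N _ t []
       | intros t t' b b1 b2 r IH rb IHb N H x [<-|Hx];
         [ apply IH; apply H; apply in_or_app; right; left; reflexivity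
         | eapply IHb; eauto; intros y Hy; apply H; apply in_app_or in Hy; apply in_or_app;
           destruct Hy; [left|right;right]; auto]
 | intros n M H; exact H
       | intros s s' r IH M H; inversion H; subst; constructor; auto
       | intros s s' b b' r IH rb IHb M H; inversion H; subst; constructor; eauto
       | intros N _ t []
       | intros t t' b b1 b2 r IH rb IHb N H x [<-|Hx];
         [ apply IH; apply H; apply in_or_app; right; left; reflexivity
         | eapply IHb; eauto; intros y Hy; apply H; apply in_app_or in Hy; apply in_or_app;
           destruct Hy; [left|right;right]; auto]].
Qed.

Lemma req_approx u s M : req u s -> approx s M -> approx u M.
Proof. intros; eapply (proj1 req_approx_gen); eauto. Qed.

Lemma req_refl s : req s s.
Proof.
  induction s as [n|s IH|s b IH IHb] using rterm_ind'; constructor; auto.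
  induction IHb; [constructor| apply (bag_req_cons x x l [] l); auto].
Qed.

Lemma approx_lift : forall s M c d, approx s M -> approx (rlift c d s) (lift c d M).
Proof.
  intros s M c d H; revert c; induction H; intros c; simpl.
  - rewrite lift_var; constructor.
  - rewrite lift_lam; constructor; auto.
  - rewrite lift_app; constructor; auto.
    intros t Ht; apply in_map_iff in Ht; destruct Ht as [x [<- Hx]]; auto.
Qed.

Lemma approx_lift_inv : forall u M c d, approx u (lift c d M) -> exists s, approx s M /\ u = rlift c d s.
Proof.
  induction u as [n|u IH|u b IH IHb] using rterm_ind'; intros M c d H; destruct M as [m|M1|M1 M2];
  try rewrite lift_var in H; try rewrite lift_lam in H; try rewrite lift_app in H;
  inversion H; subst.
  - exists (RVar m); split; [constructor|reflexivity].
  - destruct (IH M1 (S c) d) as [s [Hs ->]]; [assumption|]. exists (RLam s); split; [constructor; auto|reflexivity].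
  - destruct (IH M1 c d) as [s [Hs ->]]; [assumption|].
    match goal with H4 : forall t, In t b -> approx t _ |- _ => rename H4 into Hb end.
    assert (exists bs, (forall t, In t bs -> approx t M2) /\ b = map (rlift c d) bs) as [bs [Hbs ->]].
    { clear - IHb Hb. induction IHb as [|x l Hx Hl IHl].
      - exists []; split; [intros t []|reflexivity].
      - destruct (Hx _ _ _ (Hb x (or_introl eq_refl))) as [sx [Hsx ->]].
        destruct IHl as [bs [Hbs Heq]]. { intros; apply Hb; right; auto. }
        exists (sx :: bs); split; [intros t [<-|Ht]; auto | simpl; rewrite Heq; reflexivity]. }
    exists (RApp s bs); split; [constructor; auto | reflexivity].
Qed.

Fixpoint fillb (k : nat) (b ts : list rterm) : list rterm * list rterm :=
  match b with
  | [] => ([], ts)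
  | u :: b' => let (u', ts2) := fill k u ts in
               let (b'', ts3) := fillb k b' ts2 in (u' :: b'', ts3)
  end.

Lemma fill_app_eq k s b ts : fill k (RApp s b) ts =
  let (s1', ts1) := fill k s ts in let (b', ts2) := fillb k b ts1 in (RApp s1' b', ts2).
Proof.
  simpl. destruct (fill k s ts) as [a r].
  assert (E : forall b ts, (fix fillb (b0 ts0 : list rterm) {struct b0} : list rterm * list rterm :=
                 match b0 with
                 | [] => ([], ts0)
                 | u :: b' => let (u', ts2) := fill k u ts0 in
                              let (b'', ts3) := fillb b' ts2 in (u' :: b'', ts3)
                 end) b ts = fillb k b ts).
  { induction b0; intros; simpl; [reflexivity|]. destruct (fill k a0 ts0). rewrite IHb0. reflexivity. }
  rewrite E. reflexivity.
Qed.

Definition occb k (b : list rterm) := fold_right (fun t acc => occ k t + acc) 0 b.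

Lemma In_skipn {A} n (l : list A) x : In x (skipn n l) -> In x l.
Proof. intros H. rewrite <- (firstn_skipn n l). apply in_or_app; right; auto. Qed.

Lemma fill_fwd N : forall s M k ts, approx s M -> (forall t, In t ts -> approx t N) ->
  occ k s <= length ts ->
  approx (fst (fill k s ts)) (subst k N M) /\ snd (fill k s ts) = skipn (occ k s) ts.
Proof.
  induction s as [n|s IH|s b IH IHb] using rterm_ind'; intros M k ts Ha Hts Hocc;
  inversion Ha; subst.
  - rewrite subst_var. simpl in *. destruct (n =? k) eqn:E.
    + destruct ts as [|t ts']; simpl in Hocc; [lia|]. simpl. split; [|reflexivity].
      apply approx_lift. apply Hts; left; auto.
    + destruct (k <? n); simpl; split; try constructor; reflexivity.
  - rewrite subst_lam. simpl in *. destruct (fill (S k) s ts) as [a r] eqn:E.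
    destruct (IH _ (S k) ts H0 Hts Hocc) as [H1 H2]. rewrite E in H1, H2. simpl in *.
    split; [constructor|]; auto.
  - rewrite subst_app. rewrite fill_app_eq. simpl in Hocc.
    destruct (IH _ k ts H1 Hts) as [H5 H6]; [lia|].
    destruct (fill k s ts) as [a r] eqn:E. simpl in H5, H6.
    assert (Hb : forall ts, (forall t, In t ts -> approx t N) -> occb k b <= length ts ->
      (forall x, In x (fst (fillb k b ts)) -> approx x (subst k N N0)) /\
      snd (fillb k b ts) = skipn (occb k b) ts).
    { clear - IHb H3. induction IHb as [|x l Hx Hl IHl]; intros ts Hts Hocc.
      - simpl. split; [intros _ []|reflexivity].
      - simpl in Hocc |- *.
        destruct (Hx N0 k ts (H3 x (or_introl eq_refl)) Hts) as [A1 A2]; [lia|].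
        destruct (fill k x ts) as [x' r1] eqn:E1. simpl in A1, A2.
        destruct (IHl (fun t Ht => H3 t (or_intror Ht)) r1) as [B1 B2].
        { intros t Ht; apply Hts; subst; eapply In_skipn; eauto. }
        { subst; rewrite length_skipn; lia. }
        destruct (fillb k l r1) as [l' r2]. simpl in *. split.
        + intros y [<-|Hy]; auto.
        + rewrite B2, A2, skipn_skipn. f_equal. lia. }
    destruct (Hb r) as [B1 B2].
    { intros t Ht; apply Hts; subst; eapply In_skipn; eauto. }
    { subst; rewrite length_skipn. unfold occb; lia. }
    destruct (fillb k b r) as [b' r2]. simpl in *. split.
    + constructor; auto.
    + rewrite B2, H6, skipn_skipn. unfold occb. f_equal. lia.
Qed.

Lemma fill_bwd_var N u m k : approx u (subst k N (Var m)) -> exists s ts, approx s (Var m) /\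
  (forall t, In t ts -> approx t N) /\ occ k s = length ts /\
  forall rest, fill k s (ts ++ rest) = (u, rest).
Proof.
  intros H. rewrite subst_var in H. destruct (m =? k) eqn:E.
    + destruct (approx_lift_inv _ _ _ _ H) as [t [Ht Heq]].
      exists (RVar m), [t]. repeat split; try constructor.
      * intros x [<-|[]]; auto.
      * simpl; rewrite E; reflexivity.
      * intros rest. simpl. rewrite E. rewrite Heq. apply Nat.eqb_eq in E. subst. reflexivity.
    + exists (RVar m), []. repeat split; try constructor.
      * intros x [].
      * simpl; rewrite E; reflexivity.
      * intros rest. simpl. rewrite E. destruct (k <? m); inversion H; subst; reflexivity.
Qed.

Lemma fill_bwd N : forall u M k, approx u (subst k N M) -> exists s ts, approx s M /\
  (forall t, In t ts -> approx t N) /\ occ k s = length ts /\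
  forall rest, fill k s (ts ++ rest) = (u, rest).
Proof.
  induction u as [n|u IH|u b IH IHb] using rterm_ind'; intros M k H; destruct M as [m|M1|M1 M2];
  try (apply fill_bwd_var; auto; fail);
  try rewrite subst_lam in H; try rewrite subst_app in H;
  try (inversion H; fail).
  - inversion H; subst. destruct (IH M1 (S k)) as [s [ts [A1 [A2 [A3 A4]]]]]; [assumption|].
    exists (RLam s), ts. repeat split; auto; [constructor; auto|].
    intros rest. simpl. rewrite A4. reflexivity.
  - inversion H; subst. destruct (IH M1 k) as [s [ts [A1 [A2 [A3 A4]]]]]; [assumption|].
    match goal with H4 : forall t, In t b -> approx t _ |- _ => rename H4 into Hb4 end.
    assert (Hb : exists bs ts', (forall x, In x bs -> approx x M2) /\
       (forall t, In t ts' -> approx t N) /\ occb k bs = length ts' /\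
       forall rest, fillb k bs (ts' ++ rest) = (b, rest)).
    { clear - IHb Hb4. induction IHb as [|x l Hx Hl IHl].
      - exists [], []. repeat split; try (intros ? []); reflexivity.
      - destruct (Hx _ _ (Hb4 x (or_introl eq_refl))) as [s [ts [B1 [B2 [B3 B4]]]]].
        destruct IHl as [bs [ts' [C1 [C2 [C3 C4]]]]]. { intros; apply Hb4; right; auto. }
        exists (s :: bs), (ts ++ ts'). repeat split.
        + intros y [<-|Hy]; auto.
        + intros t Ht; apply in_app_or in Ht; destruct Ht; auto.
        + unfold occb in *. simpl. rewrite length_app. lia.
        + intros rest. simpl. rewrite <- app_assoc, B4, C4. reflexivity. }
    destruct Hb as [bs [ts' [C1 [C2 [C3 C4]]]]].
    exists (RApp s bs), (ts ++ ts'). repeat split.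
    + constructor; auto.
    + intros t Ht; apply in_app_or in Ht; destruct Ht; auto.
    + simpl. rewrite length_app. unfold occb in C3. lia.
    + intros rest. rewrite fill_app_eq, <- app_assoc, A4, C4. reflexivity.
Qed.

Fixpoint size (s : rterm) : nat :=
  match s with
  | RVar _ => 1
  | RLam s1 => S (size s1)
  | RApp s1 b => S (size s1 + list_sum (map size b))
  end.
Definition sizes (l : list rterm) := list_sum (map size l).

Lemma size_pos s : 1 <= size s.
Proof. destruct s; simpl; lia. Qed.

Lemma sizes_app l1 l2 : sizes (l1 ++ l2) = sizes l1 + sizes l2.
Proof. unfold sizes; rewrite map_app, list_sum_app; reflexivity. Qed.

Lemma size_rlift : forall s c d, size (rlift c d s) = size s.
Proof.
  induction s as [n|s IH|s b IH IHb] using rterm_ind'; intros c d; simpl; auto.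
  rewrite IH. f_equal. f_equal. rewrite map_map. induction IHb; simpl; auto.
Qed.

Lemma fill_size : forall s k ts,
  size (fst (fill k s ts)) + sizes (snd (fill k s ts)) <= size s + sizes ts.
Proof.
  induction s as [n|s IH|s b IH IHb] using rterm_ind'; intros k ts.
  - simpl. destruct (n =? k); [destruct ts as [|t ts']|destruct (k <? n)]; simpl;
    unfold sizes; simpl; try rewrite size_rlift; lia.
  - simpl. specialize (IH (S k) ts). destruct (fill (S k) s ts) as [a r]; simpl in *; lia.
  - rewrite fill_app_eq. specialize (IH k ts). destruct (fill k s ts) as [a r]; simpl in *.
    assert (Hb : forall ts, sizes (fst (fillb k b ts)) + sizes (snd (fillb k b ts)) <= sizes b + sizes ts).
    { clear - IHb. induction IHb as [|x l Hx Hl IHl]; intros ts; simpl; [lia|].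
      specialize (Hx k ts). destruct (fill k x ts) as [x' r1]. specialize (IHl r1).
      destruct (fillb k l r1) as [l' r2]. simpl in *. unfold sizes in *; simpl; lia. }
    specialize (Hb r). destruct (fillb k b r) as [b' r2]. simpl in *. unfold sizes in *. lia.
Qed.

Lemma insert_all_perm {A} (x : A) : forall l p, In p (insert_all x l) -> Permutation p (x :: l).
Proof.
  induction l as [|y l IH]; simpl; intros p Hp.
  - destruct Hp as [<-|[]]; auto.
  - destruct Hp as [<-|Hp]; auto. apply in_map_iff in Hp. destruct Hp as [q [<- Hq]].
    apply IH in Hq. eapply perm_trans; [apply perm_skip, Hq|]. apply perm_swap.
Qed.

Lemma perms_perm {A} : forall (l p : list A), In p (perms l) -> Permutation p l.
Proof.
  induction l as [|x l IH]; simpl; intros p Hp.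
  - destruct Hp as [<-|[]]; auto.
  - apply in_concat in Hp. destruct Hp as [q [Hq Hp]]. apply in_map_iff in Hq.
    destruct Hq as [r [<- Hr]]. apply insert_all_perm in Hp. eapply perm_trans; [apply Hp|].
    apply perm_skip, IH; auto.
Qed.

Lemma perms_self {A} : forall (l : list A), In l (perms l).
Proof.
  induction l as [|x l IH]; simpl; auto.
  apply in_concat. exists (insert_all x l). split; [apply in_map; auto|].
  destruct l; simpl; auto.
Qed.

Lemma sizes_perm l l' : Permutation l l' -> sizes l = sizes l'.
Proof. induction 1; unfold sizes in *; simpl; lia. Qed.

Definition seteq (S S' : rsum) := incl S S' /\ incl S' S.

Lemma seteq_refl S : seteq S S.
Proof. split; apply incl_refl. Qed.
Lemma seteq_sym S S' : seteq S S' -> seteq S' S.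
Proof. intros [a b]; split; auto. Qed.
Lemma seteq_trans S1 S2 S3 : seteq S1 S2 -> seteq S2 S3 -> seteq S1 S3.
Proof. intros [a b] [c d]; split; eapply incl_tran; eauto. Qed.
Lemma seteq_app A A' B B' : seteq A A' -> seteq B B' -> seteq (A ++ B) (A' ++ B').
Proof. intros [a b] [c d]; split; apply incl_app_app; auto. Qed.
Lemma seteq_perm A B : Permutation A B -> seteq A B.
Proof. intros H; split; intros x Hx; [eapply Permutation_in|eapply Permutation_in; [symmetry|]]; eauto. Qed.
Lemma seteq_eq A B : A = B -> seteq A B.
Proof. intros ->; apply seteq_refl. Qed.

Definition msum (S S' : rsum) : Prop :=
  exists (s0 : rterm) (T0 : rsum) (L : list (rterm * rsum)),
    rstep s0 T0 /\
    (forall p, In p L -> rstep (fst p) (snd p) \/ snd p = [fst p]) /\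
    seteq S (s0 :: map fst L) /\
    seteq S' (T0 ++ concat (map snd L)).

Inductive mstar : rsum -> rsum -> Prop :=
| ms_refl S S' : seteq S S' -> mstar S S'
| ms_step S S1 S2 : msum S S1 -> mstar S1 S2 -> mstar S S2.

Lemma mstar_compat S0 S S' S1 : seteq S0 S -> mstar S S' -> seteq S' S1 -> mstar S0 S1.
Proof.
  intros H1 H2; revert S0 S1 H1; induction H2; intros S0 S3 H1 H3.
  - constructor. eapply seteq_trans; [eauto|]. eapply seteq_trans; eauto.
  - apply ms_step with S1; [|apply IHmstar; [apply seteq_refl|exact H3]].
    destruct H as [s0 [T0 [L [A [B [C D]]]]]]. exists s0, T0, L; split; [auto|split; [auto|split; auto]].
    eapply seteq_trans; eauto.
Qed.

Lemma mstar_trans S1 S2 S3 : mstar S1 S2 -> mstar S2 S3 -> mstar S1 S3.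
Proof.
  intros H; revert S3; induction H as [S S' E|S S1 S2 E H IH]; intros S3 H3.
  - exact (mstar_compat _ _ _ _ E H3 (seteq_refl _)).
  - apply ms_step with S1; auto.
Qed.

Lemma concat_single {A} (R : list A) : concat (map (fun r => [r]) R) = R.
Proof. induction R; simpl; congruence. Qed.

Lemma msum_app_r S S' R : msum S S' -> msum (S ++ R) (S' ++ R).
Proof.
  intros [s0 [T0 [L [A [B [C D]]]]]].
  exists s0, T0, (L ++ map (fun r => (r, [r])) R). split; [auto|split; [|split]].
  - intros p Hp. apply in_app_or in Hp. destruct Hp as [Hp|Hp]; auto.
    apply in_map_iff in Hp. destruct Hp as [r [<- _]]. right; reflexivity.
  - rewrite map_app, map_map. simpl. rewrite map_id. change (s0 :: map fst L ++ R) with ((s0 :: map fst L) ++ R).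
    apply seteq_app; auto using seteq_refl.
  - rewrite map_app, concat_app, map_map. simpl. unfold rsum. rewrite (concat_single R), app_assoc.
    apply seteq_app; auto using seteq_refl.
Qed.

Lemma msum_app_l S S' R : msum S S' -> msum (R ++ S) (R ++ S').
Proof.
  intros [s0 [T0 [L [A [B [C D]]]]]].
  exists s0, T0, (map (fun r => (r, [r])) R ++ L). split; [auto|split; [|split]].
  - intros p Hp. apply in_app_or in Hp. destruct Hp as [Hp|Hp]; auto.
    apply in_map_iff in Hp. destruct Hp as [r [<- _]]. right; reflexivity.
  - rewrite map_app, map_map. simpl. rewrite map_id.
    eapply seteq_trans; [apply seteq_app; [apply seteq_refl|apply C]|].
    apply seteq_perm. apply Permutation_sym, Permutation_middle.
  - rewrite map_app, concat_app, map_map. simpl. unfold rsum. rewrite concat_single.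
    eapply seteq_trans; [apply seteq_app; [apply seteq_refl|apply D]|].
    apply seteq_perm. rewrite !app_assoc. apply Permutation_app_tail, Permutation_app_comm.
Qed.

Lemma mstar_app_r S S' R : mstar S S' -> mstar (S ++ R) (S' ++ R).
Proof.
  induction 1.
  - constructor; apply seteq_app; auto using seteq_refl.
  - eapply ms_step; [apply msum_app_r; eauto|]; auto.
Qed.

Lemma mstar_app_l S S' R : mstar S S' -> mstar (R ++ S) (R ++ S').
Proof.
  induction 1.
  - constructor; apply seteq_app; auto using seteq_refl.
  - eapply ms_step; [apply msum_app_l; eauto|]; auto.
Qed.

Lemma mstar_app S1 S1' S2 S2' : mstar S1 S1' -> mstar S2 S2' -> mstar (S1 ++ S2) (S1' ++ S2').
Proof. intros; eapply mstar_trans; [apply mstar_app_r; eauto|apply mstar_app_l; eauto]. Qed.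

Lemma mstar_concat l Ts : Forall2 (fun x T => mstar [x] T) l Ts -> mstar l (concat Ts).
Proof.
  induction 1; simpl; [constructor; apply seteq_refl|].
  change (x :: l) with ([x] ++ l). apply mstar_app; auto.
Qed.

Lemma ex_Forall2 {A B} (P : A -> B -> Prop) l : (forall x, In x l -> exists y, P x y) ->
  exists ys, Forall2 P l ys.
Proof.
  induction l as [|x l IH]; intros H; [exists []; constructor|].
  destruct (H x (or_introl eq_refl)) as [y Hy]. destruct IH as [ys Hys]; [intros; apply H; right; auto|].
  exists (y :: ys); constructor; auto.
Qed.

Lemma Forall2_in_r {A B} (P : A -> B -> Prop) l ys y : Forall2 P l ys -> In y ys -> exists x, In x l /\ P x y.
Proof. induction 1 as [|x y0 l ys Hxy H IH]; simpl; [intros []|]. intros [<-|Hy]; [exists x; split; [left|]; auto|]. destruct (IH Hy) as [z [Hz Pz]]; exists z; split; [right|]; auto. Qed.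

Lemma Forall2_map_l {A B C} (P : A -> B -> Prop) (f : C -> A) l ys :
  Forall2 (fun x y => P (f x) y) l ys -> Forall2 P (map f l) ys.
Proof. induction 1; simpl; constructor; auto. Qed.

Lemma Forall2_map_r {A B} (P : A -> B -> Prop) (g : A -> B) l :
  (forall x, In x l -> P x (g x)) -> Forall2 P l (map g l).
Proof. induction l; simpl; intros H; constructor; auto. Qed.

Lemma seteq_map (f : rterm -> rterm) A B : seteq A B -> seteq (map f A) (map f B).
Proof.
  intros [a b]; split; intros x Hx; apply in_map_iff in Hx;
  destruct Hx as [y [<- Hy]]; apply in_map; auto.
Qed.

Lemma mstar_map (f : rterm -> rterm) : (forall s T, rstep s T -> rstep (f s) (map f T)) ->
  forall S S', mstar S S' -> mstar (map f S) (map f S').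
Proof.
  intros Hf S S' H; induction H.
  - constructor. apply seteq_map; auto.
  - apply ms_step with (map f S1); auto.
    destruct H as [s0 [T0 [L [A [B [C D]]]]]].
    exists (f s0), (map f T0), (map (fun p : rterm * rsum => ((f (fst p), map f (snd p)) : rterm * rsum)) L).
    split; [auto|split; [|split]].
    + intros p Hp. apply in_map_iff in Hp. destruct Hp as [q [<- Hq]]. simpl.
      destruct q as [a T]; destruct (B _ Hq) as [E|E]; simpl in *; [left; auto|right; subst; reflexivity].
    + assert (E : map fst (map (fun p : rterm * rsum => ((f (fst p), map f (snd p)) : rterm * rsum)) L) = map f (map fst L))
        by (rewrite !map_map; reflexivity).
      rewrite E. change (f s0 :: map f (map fst L)) with (map f (s0 :: map fst L)).
      apply seteq_map; auto.
    + assert (E : concat (map snd (map (fun p : rterm * rsum => ((f (fst p), map f (snd p)) : rterm * rsum)) L)) = map f (concat (map snd L)))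
        by (rewrite concat_map, !map_map; reflexivity).
      rewrite E, <- map_app. apply seteq_map; auto.
Qed.

Fixpoint cart (Ts : list rsum) : list (list rterm) :=
  match Ts with
  | [] => [[]]
  | T :: Ts' => concat (map (fun t => map (cons t) (cart Ts')) T)
  end.

Lemma cart_in : forall Ts bs, In bs (cart Ts) <-> Forall2 (fun x T => In x T) bs Ts.
Proof.
  induction Ts as [|T Ts IH]; intros bs; simpl; split.
  - intros [<-|[]]; constructor.
  - intros H; inversion H; left; auto.
  - intros H. apply in_concat in H. destruct H as [l [Hl Hb]]. apply in_map_iff in Hl.
    destruct Hl as [t [<- Ht]]. apply in_map_iff in Hb. destruct Hb as [bs' [<- Hbs]].
    constructor; auto. apply IH; auto.
  - intros H; inversion H; subst. apply in_concat. exists (map (cons x) (cart Ts)).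
    split; [apply in_map_iff; exists x; auto|]. apply in_map. apply IH; auto.
Qed.

Definition prodApp (T0 : rsum) (Ts : list rsum) : rsum :=
  concat (map (fun a => map (RApp a) (cart Ts)) T0).

Lemma prodApp_in T0 Ts x : In x (prodApp T0 Ts) <-> exists a bs, In a T0 /\ In bs (cart Ts) /\ x = RApp a bs.
Proof.
  unfold prodApp; split.
  - intros H. apply in_concat in H. destruct H as [l [Hl Hx]]. apply in_map_iff in Hl.
    destruct Hl as [a [<- Ha]]. apply in_map_iff in Hx. destruct Hx as [bs [<- Hbs]]. eauto.
  - intros [a [bs [Ha [Hbs ->]]]]. apply in_concat. exists (map (RApp a) (cart Ts)).
    split; [apply in_map_iff; eauto|apply in_map; auto].
Qed.

Lemma mstar_bag a : forall b Ts, Forall2 (fun t T => mstar [t] T) b Ts -> forall pre,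
  mstar [RApp a (pre ++ b)] (map (fun bs => RApp a (pre ++ bs)) (cart Ts)).
Proof.
  induction 1 as [|t T b Ts Ht H IH]; intros pre.
  - simpl. constructor. apply seteq_refl.
  - set (f := fun t' => RApp a (pre ++ t' :: b)).
    assert (H1 : mstar [RApp a (pre ++ t :: b)] (map f T)).
    { change [RApp a (pre ++ t :: b)] with (map f [t]). apply mstar_map; auto.
      intros s U HU. unfold f. apply rstep_appr; auto. }
    eapply mstar_trans; [apply H1|].
    assert (H2 : mstar (map f T) (concat (map (fun t' => map (fun bs => RApp a (pre ++ t' :: bs)) (cart Ts)) T))).
    { apply mstar_concat. apply Forall2_map_l. apply Forall2_map_r. intros t' _.
      unfold f. specialize (IH (pre ++ [t'])). rewrite <- app_assoc in IH. simpl in IH.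
      replace (map (fun bs => RApp a (pre ++ t' :: bs)) (cart Ts)) with
        (map (fun bs => RApp a ((pre ++ [t']) ++ bs)) (cart Ts)); auto.
      apply map_ext; intros; rewrite <- app_assoc; reflexivity. }
    eapply mstar_compat; [apply seteq_refl|apply H2|]. apply seteq_eq.
    simpl. rewrite concat_map, !map_map. f_equal. apply map_ext. intros t'. rewrite map_map. reflexivity.
Qed.

Lemma mstar_prod s0 T0 b Ts : mstar [s0] T0 -> Forall2 (fun t T => mstar [t] T) b Ts ->
  mstar [RApp s0 b] (prodApp T0 Ts).
Proof.
  intros H0 Hb.
  assert (H1 : mstar [RApp s0 b] (map (fun x => RApp x b) T0)).
  { change [RApp s0 b] with (map (fun x => RApp x b) [s0]). apply mstar_map; auto.
    intros s U HU. apply rstep_appl; auto. }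
  eapply mstar_trans; [apply H1|]. unfold prodApp. apply mstar_concat.
  apply Forall2_map_l. apply Forall2_map_r. intros a _.
  replace (map (RApp a) (cart Ts)) with (map (fun bs => RApp a ([] ++ bs)) (cart Ts)) by reflexivity.
  apply (mstar_bag a b Ts Hb []).
Qed.

Lemma mstar_lam s T : mstar [s] T -> mstar [RLam s] (map RLam T).
Proof.
  intros H. change [RLam s] with (map RLam [s]). apply mstar_map; auto.
  intros; apply rstep_lam; auto.
Qed.

Lemma rstep_size : forall s T, rstep s T -> forall t, In t T -> size t < size s.
Proof.
  induction 1; intros t0 Ht.
  - unfold rsubst in Ht. destruct (occ 0 s =? length b); [|destruct Ht].
    apply in_map_iff in Ht. destruct Ht as [p [<- Hp]].
    pose proof (fill_size s 0 p). apply perms_perm, sizes_perm in Hp.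
    simpl. unfold sizes in *. lia.
  - apply in_map_iff in Ht. destruct Ht as [x [<- Hx]]. simpl. specialize (IHrstep x Hx). lia.
  - apply in_map_iff in Ht. destruct Ht as [x [<- Hx]]. simpl. specialize (IHrstep x Hx). lia.
  - apply in_map_iff in Ht. destruct Ht as [x [<- Hx]]. simpl. specialize (IHrstep x Hx).
    rewrite !map_app, !list_sum_app. simpl. lia.
Qed.

Lemma mstar_size n : forall S S', mstar S S' -> (forall t, In t S -> size t <= n) ->
  forall t, In t S' -> size t <= n.
Proof.
  induction 1 as [S S' [a b]|S S1 S2 Hs H IH]; intros HS.
  - intros t Ht; apply HS, b, Ht.
  - apply IH. destruct Hs as [s0 [T0 [L [A [B [[C1 C2] [D1 D2]]]]]]].
    intros t Ht. apply D1 in Ht. apply in_app_or in Ht. destruct Ht as [Ht|Ht].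
    + apply rstep_size with (t := t) in A; auto. assert (size s0 <= n) by (apply HS, C2; left; auto). lia.
    + apply in_concat in Ht. destruct Ht as [l [Hl Ht]]. apply in_map_iff in Hl.
      destruct Hl as [p [<- Hp]]. assert (size (fst p) <= n).
      { apply HS, C2. right. apply in_map; auto. }
      destruct (B p Hp) as [E|E].
      * apply rstep_size with (t := t) in E; auto. lia.
      * rewrite E in Ht. destruct Ht as [<-|[]]. auto.
Qed.

Definition Fwd M N := forall s, approx s M -> exists T, mstar [s] T /\ (forall t, In t T -> approx t N).
Definition Reach M N u := exists s T, approx s M /\ mstar [s] T /\ (forall t, In t T -> approx t N) /\ In u T.
Definition Bwd M N := forall u, approx u N -> Reach M N u.

Lemma mstar_refl S : mstar S S.
Proof. constructor; apply seteq_refl. Qed.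

Lemma Fwd_bisim M M' : bisim M M' -> Fwd M M'.
Proof.
  intros H s Hs. exists [s]; split; [apply mstar_refl|]. intros t [<-|[]].
  eapply approx_bisim; eauto.
Qed.

Lemma Bwd_bisim M M' : bisim M M' -> Bwd M M'.
Proof.
  intros H u Hu. exists u, [u]. split; [eapply approx_bisim; eauto|].
  split; [apply mstar_refl|]. split; [intros t [<-|[]]; auto|left; auto].
Qed.

Lemma Fwd_id M : Fwd M M.
Proof. intros s Hs. exists [s]; split; [apply mstar_refl|]. intros t [<-|[]]; auto. Qed.
Lemma Bwd_id M : Bwd M M.
Proof. intros u Hu. exists u, [u]. split; auto. split; [apply mstar_refl|]. split; [intros t [<-|[]]; auto|left; auto]. Qed.

Lemma Forall2_in_l {A B} (P : A -> B -> Prop) l ys x : Forall2 P l ys -> In x l -> exists y, In y ys /\ P x y.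
Proof. induction 1 as [|a b l ys Hab H IH]; simpl; [intros []|]. intros [<-|Hx]; [exists b; split; [left|]; auto|]. destruct (IH Hx) as [z [Hz Pz]]; exists z; split; [right|]; auto. Qed.

Lemma mstar_bind s T1 (P : rterm -> Prop) :
  mstar [s] T1 -> (forall t, In t T1 -> exists T, mstar [t] T /\ forall x, In x T -> P x) ->
  exists T, mstar [s] T /\ forall x, In x T -> P x.
Proof.
  intros H1 H2. destruct (ex_Forall2 (fun t T => mstar [t] T /\ forall x, In x T -> P x) T1 H2) as [Ts HTs].
  exists (concat Ts). split.
  - eapply mstar_trans; [apply H1|]. apply mstar_concat. eapply Forall2_impl; [|apply HTs]. intros ? ? []; auto.
  - intros x Hx. apply in_concat in Hx. destruct Hx as [T [HT Hx]].
    destruct (Forall2_in_r _ _ _ _ HTs HT) as [t [_ [_ HP]]]. auto.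
Qed.

Lemma Fwd_trans M1 M2 M3 : Fwd M1 M2 -> Fwd M2 M3 -> Fwd M1 M3.
Proof.
  intros H1 H2 s Hs. destruct (H1 s Hs) as [T1 [A B]]. eapply mstar_bind; eauto.
Qed.

Lemma compose M1 M2 M3 u : Bwd M1 M2 -> Fwd M2 M3 -> Reach M2 M3 u -> Reach M1 M3 u.
Proof.
  intros HB HF [w [Tw [A [B [C D]]]]].
  destruct (HB w A) as [s [T1 [A1 [B1 [C1 D1]]]]].
  destruct (ex_Forall2 (fun t T => mstar [t] T /\ forall x, In x T -> approx x M3) T1) as [Ts HTs].
  { intros t Ht. apply HF, C1, Ht. }
  exists s, (concat Ts ++ Tw). split; auto. split; [|split].
  - eapply mstar_trans; [apply B1|].
    apply mstar_compat with (S := T1 ++ [w]) (S' := concat Ts ++ Tw).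
    + split; intros x Hx; [apply in_or_app; left; auto|]. apply in_app_or in Hx.
      destruct Hx as [Hx|[<-|[]]]; auto.
    + apply mstar_app; [|auto]. apply mstar_concat. eapply Forall2_impl; [|apply HTs]. intros ? ? []; auto.
    + apply seteq_refl.
  - intros x Hx. apply in_app_or in Hx. destruct Hx as [Hx|Hx]; auto.
    apply in_concat in Hx. destruct Hx as [T [HT Hx]].
    destruct (Forall2_in_r _ _ _ _ HTs HT) as [t [_ [_ HP]]]. auto.
  - apply in_or_app; right; auto.
Qed.

Lemma Bwd_trans M1 M2 M3 : Bwd M1 M2 -> Fwd M2 M3 -> Bwd M2 M3 -> Bwd M1 M3.
Proof. intros H1 H2 H3 u Hu. eapply compose; eauto. Qed.

Lemma Fwd_lam P P' : Fwd P P' -> Fwd (Lam P) (Lam P').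
Proof.
  intros H s Hs. inversion Hs as [|s1 P0 Hs1|]; subst. destruct (H _ Hs1) as [T [A B]].
  exists (map RLam T). split; [apply mstar_lam; auto|].
  intros t Ht. apply in_map_iff in Ht. destruct Ht as [x [<- Hx]]. constructor; auto.
Qed.

Lemma Reach_lam P P' u : Reach P P' u -> Reach (Lam P) (Lam P') (RLam u).
Proof.
  intros [s [T [A [B [C D]]]]]. exists (RLam s), (map RLam T). split; [constructor; auto|].
  split; [apply mstar_lam; auto|]. split; [|apply in_map; auto].
  intros t Ht. apply in_map_iff in Ht. destruct Ht as [x [<- Hx]]. constructor; auto.
Qed.

Lemma Bwd_lam P P' : Bwd P P' -> Bwd (Lam P) (Lam P').
Proof. intros H u Hu. inversion Hu; subst. apply Reach_lam; auto. Qed.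

Lemma prod_approx P' Q' T0 Ts : (forall a, In a T0 -> approx a P') ->
  (forall T, In T Ts -> forall x, In x T -> approx x Q') ->
  forall x, In x (prodApp T0 Ts) -> approx x (App P' Q').
Proof.
  intros H0 H1 x Hx. apply prodApp_in in Hx. destruct Hx as [a [bs [Ha [Hbs ->]]]].
  constructor; auto. apply cart_in in Hbs. intros y Hy.
  destruct (Forall2_in_l _ _ _ _ Hbs Hy) as [T [HT HyT]]. eauto.
Qed.

Lemma Fwd_app P P' Q Q' : Fwd P P' -> Fwd Q Q' -> Fwd (App P Q) (App P' Q').
Proof.
  intros HP HQ s Hs. inversion Hs as [| |s0 b P0 Q0 Hs0 Hb]; subst. destruct (HP _ Hs0) as [T0 [A B]].
  destruct (ex_Forall2 (fun t T => mstar [t] T /\ forall x, In x T -> approx x Q') b) as [Ts HTs].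
  { intros t Ht. apply HQ; auto. }
  exists (prodApp T0 Ts). split.
  - apply mstar_prod; auto. eapply Forall2_impl; [|apply HTs]. intros ? ? []; auto.
  - apply prod_approx; auto. intros T HT. destruct (Forall2_in_r _ _ _ _ HTs HT) as [t [_ [_ HP']]]. auto.
Qed.

Lemma Reach_app P P' Q Q' u0 bu : Reach P P' u0 -> (forall u, In u bu -> Reach Q Q' u) ->
  Reach (App P Q) (App P' Q') (RApp u0 bu).
Proof.
  intros [s0 [T0 [A0 [B0 [C0 D0]]]]] H.
  destruct (ex_Forall2 (fun u p => approx (fst p) Q /\ mstar [fst p] (snd p) /\
     (forall t, In t (snd p) -> approx t Q') /\ In u (snd p)) bu) as [ps Hps].
  { intros u Hu. destruct (H u Hu) as [s [T [A [B [C D]]]]]. exists (s, T). simpl; auto. }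
  assert (K : Forall2 (fun t T => mstar [t] T) (map fst ps) (map snd ps) /\
              Forall2 (fun x T => In x T) bu (map snd ps) /\
              (forall s, In s (map fst ps) -> approx s Q) /\
              (forall T, In T (map snd ps) -> forall x, In x T -> approx x Q')).
  { clear - Hps. induction Hps as [|u p bu ps [A [B [C D]]] _ [K1 [K2 [K3 K4]]]]; simpl.
    - split; [constructor|split; [constructor|split; intros ? []]].
    - split; [constructor; auto|split; [constructor; auto|split]].
      + intros s [<-|Hs]; auto.
      + intros T [<-|HT]; [exact C|exact (K4 T HT)].
      }
  destruct K as [K1 [K2 [K3 K4]]].
  exists (RApp s0 (map fst ps)), (prodApp T0 (map snd ps)). split; [constructor; auto|].
  split; [apply mstar_prod; auto|]. split; [apply prod_approx; auto|].
  apply prodApp_in. exists u0, bu. split; auto. split; auto. apply cart_in; auto.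
Qed.

Lemma Bwd_app P P' Q Q' : Bwd P P' -> Bwd Q Q' -> Bwd (App P Q) (App P' Q').
Proof. intros HP HQ u Hu. inversion Hu; subst. apply Reach_app; auto. Qed.

Lemma rsubst_approx s1 b M N : approx s1 M -> (forall t, In t b -> approx t N) ->
  forall t, In t (rsubst s1 b) -> approx t (subst 0 N M).
Proof.
  intros H1 H2 t Ht. unfold rsubst in Ht. destruct (occ 0 s1 =? length b) eqn:E; [|destruct Ht].
  apply Nat.eqb_eq in E. apply in_map_iff in Ht. destruct Ht as [p [<- Hp]].
  apply perms_perm in Hp. apply (fill_fwd N s1 M 0 p); auto.
  - intros x Hx. apply H2. eapply Permutation_in; eauto.
  - rewrite (Permutation_length Hp). lia.
Qed.

Lemma mstar_one s T : rstep s T -> mstar [s] T.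
Proof.
  intros H. apply ms_step with T; [|apply mstar_refl].
  exists s, T, []. split; auto. split; [intros ? []|]. split; [apply seteq_refl|].
  simpl. rewrite app_nil_r. apply seteq_refl.
Qed.

Lemma Fwd_beta M N : Fwd (App (Lam M) N) (subst 0 N M).
Proof.
  intros s Hs. inversion Hs as [| |s0 b P0 Q0 Hs0 Hb]; subst. inversion Hs0 as [|s1 P1 Hs1|]; subst.
  exists (rsubst s1 b). split; [apply mstar_one; constructor|].
  eapply rsubst_approx; eauto.
Qed.

Lemma Bwd_beta M N : Bwd (App (Lam M) N) (subst 0 N M).
Proof.
  intros u Hu. destruct (fill_bwd N u M 0 Hu) as [s [ts [A [B [C D]]]]].
  exists (RApp (RLam s) ts), (rsubst s ts). split; [constructor; [constructor|]; auto|].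
  split; [apply mstar_one; constructor|]. split; [eapply rsubst_approx; eauto|].
  unfold rsubst. rewrite C, Nat.eqb_refl. apply in_map_iff. exists ts. split; [|apply perms_self].
  specialize (D []). rewrite app_nil_r in D. rewrite D. reflexivity.
Qed.

Lemma bstep_sim M M' : bstep M M' -> Fwd M M' /\ Bwd M M'.
Proof.
  induction 1 as [M N|M M' H [IH1 IH2]|M M' N H [IH1 IH2]|M N N' H [IH1 IH2]].
  - split; [apply Fwd_beta|apply Bwd_beta].
  - split; [apply Fwd_lam|apply Bwd_lam]; auto.
  - split; [apply Fwd_app|apply Bwd_app]; auto using Fwd_id, Bwd_id.
  - split; [apply Fwd_app|apply Bwd_app]; auto using Fwd_id, Bwd_id.
Qed.

Lemma bstar_sim M M' : bstar M M' -> Fwd M M' /\ Bwd M M'.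
Proof.
  induction 1 as [M M' H|M M1 M2 H _ [IH1 IH2]].
  - split; [apply Fwd_bisim|apply Bwd_bisim]; auto.
  - destruct (bstep_sim _ _ H) as [F B]. split; [eapply Fwd_trans|eapply Bwd_trans]; eauto.
Qed.

Lemma size_in_bag x l : In x l -> size x <= sizes l.
Proof. induction l as [|y l IH]; simpl; [intros []|]. intros [<-|H]; unfold sizes in *; simpl; [lia|]. specialize (IH H). lia. Qed.

Section Ired.
Variable R : term -> term -> Prop.
Hypothesis HR : forall X Y, R X Y -> ired_step R X Y.

Lemma ired_fwd_n : forall n s M N, size s <= n -> ired_step R M N -> approx s M ->
  exists T, mstar [s] T /\ forall t, In t T -> approx t N.
Proof.
  induction n as [|n IHn]; intros s M N Hsz Hi Hs; [pose proof (size_pos s); lia|].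
  destruct Hi as [M k Hb|M P P' Hb Hi|M P Q P' Q' Hb Hi HRQ].
  - apply (proj1 (bstar_sim _ _ Hb)); auto.
  - destruct (proj1 (bstar_sim _ _ Hb) s Hs) as [T1 [A B]].
    assert (Sz := mstar_size (S n) _ _ A). 
    eapply mstar_bind; [apply A|]. intros t Ht.
    assert (size t <= S n) by (apply Sz; auto; intros x [<-|[]]; auto).
    specialize (B t Ht). inversion B as [|t1 P0 Ht1|]; subst. simpl in *.
    destruct (IHn t1 P P') as [U [C D]]; auto; [lia|].
    exists (map RLam U). split; [apply mstar_lam; auto|].
    intros x Hx. apply in_map_iff in Hx. destruct Hx as [y [<- Hy]]. constructor; auto.
  - destruct (proj1 (bstar_sim _ _ Hb) s Hs) as [T1 [A B]].
    assert (Sz := mstar_size (S n) _ _ A).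
    eapply mstar_bind; [apply A|]. intros t Ht.
    assert (size t <= S n) by (apply Sz; auto; intros x [<-|[]]; auto).
    specialize (B t Ht). inversion B as [| |t0 b P0 Q0 Ht0 Htb]; subst. simpl in *.
    destruct (IHn t0 P P') as [T0 [C D]]; auto; [lia|].
    destruct (ex_Forall2 (fun t T => mstar [t] T /\ forall x, In x T -> approx x Q') b) as [Ts HTs].
    { intros x Hx. apply (IHn x Q Q'); auto. pose proof (size_in_bag x b Hx). unfold sizes in *. lia. }
    exists (prodApp T0 Ts). split.
    + apply mstar_prod; auto. eapply Forall2_impl; [|apply HTs]. intros ? ? []; auto.
    + apply prod_approx; auto. intros T HT. destruct (Forall2_in_r _ _ _ _ HTs HT) as [x [_ [_ HP']]]. auto.
Qed.

Lemma Fwd_ired M N : ired_step R M N -> Fwd M N.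
Proof. intros Hi s Hs. eapply ired_fwd_n; eauto. Qed.

Lemma Bwd_ired : forall u M N, ired_step R M N -> approx u N -> Reach M N u.
Proof.
  induction u as [n|u IH|u b IH IHb] using rterm_ind'; intros M N Hi Hu;
  destruct Hi as [M k Hb|M P P' Hb Hi|M P Q P' Q' Hb Hi HRQ]; inversion Hu; subst.
  - apply (proj2 (bstar_sim _ _ Hb)); auto.
  - apply compose with (M2 := Lam P); [apply (proj2 (bstar_sim _ _ Hb))|apply Fwd_lam, Fwd_ired, Hi|].
    apply Reach_lam. apply IH with (1 := Hi); auto.
  - apply compose with (M2 := App P Q); [apply (proj2 (bstar_sim _ _ Hb))|apply Fwd_app; apply Fwd_ired; [apply Hi|apply HR, HRQ]|].
    apply Reach_app; [apply IH with (1 := Hi); auto|].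
    intros x Hx. rewrite Forall_forall in IHb. apply (IHb x Hx Q); auto.
Qed.
End Ired.

Lemma seteq_sum_eq S S' : seteq S S' -> sum_eq S S'.
Proof. intros [a b]; split; intros s Hs; exists s; split; auto using req_refl. Qed.

Lemma mstar_red_star S S' : mstar S S' -> red_star S S'.
Proof.
  induction 1 as [S S' H|S S1 S2 H _ IH].
  - constructor; apply seteq_sum_eq; auto.
  - apply red_star_step with S1; auto.
    destruct H as [s0 [T0 [L [A [B [C D]]]]]]. exists s0, T0, L.
    split; auto. split; auto. split; apply seteq_sum_eq; auto.
Qed.

Theorem mainTheorem8 (M N : term) :
  wf001 M -> wf001 N -> ired M N ->
  exists (I : Type) (s : I -> rterm) (T : I -> rsum),
    (forall u, approx u M <-> exists i, req u (s i)) /\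
    (forall u, approx u N <-> exists i t, In t (T i) /\ req u t) /\
    (forall i, red_star [s i] (T i)).
Proof.
  intros _ _ [R [HRMN HR]].
  set (I := {p : rterm * rsum | approx (fst p) M /\ mstar [fst p] (snd p) /\
              forall t, In t (snd p) -> approx t N}).
  exists I, (fun i => fst (proj1_sig i)), (fun i => snd (proj1_sig i)).
  split; [|split].
  - intros u; split.
    + intros Hu. destruct (Fwd_ired R HR M N (HR _ _ HRMN) u Hu) as [T [A B]].
      exists (exist _ (u, T) (conj Hu (conj A B))). simpl. apply req_refl.
    + intros [[[s T] [A [B C]]] Hr]. simpl in Hr. eapply req_approx; eauto.
  - intros u; split.
    + intros Hu. destruct (Bwd_ired R HR u M N (HR _ _ HRMN) Hu) as [s [T [A [B [C D]]]]].
      exists (exist _ (s, T) (conj A (conj B C))), u. simpl. split; auto. apply req_refl.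
    + intros [[[s T] [A [B C]]] [t [Ht Hr]]]. simpl in Ht. eapply req_approx; eauto.
  - intros [[s T] [A [B C]]]. simpl. apply mstar_red_star; auto.
Qed.
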